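(* Let $G$ be a neighborhood unit square graph with $V(G)\ne\emptyset$. Let $X$ be the set of vertices $v\in V(G)$ for which there exist $\ell\ge4$ and distinct vertices $w_1,\dots,w_\ell\in V(G)\setminus\{v\}$ such that $vw_i\notin E(G)$ for all $i\in[\ell]$ and $G[\{w_1,\dots,w_\ell\}]\cong C_\ell$. Then $X\ne V(G)$.
   Context: A neighborhood unit square graph is a graph $G$ admitting a map $f\colon V(G)\to[-1,1]^2$ such that for distinct $v,w$, $vw\in E(G)$ iff $\|f(v)-f(w)\|_\infty\le1$. $C_\ell$ is the cycle of length $\ell$. *)

(* Defs.v *)
From HB Require Import structures.
From mathcomp Require Import all_boot all_order all_algebra.
Set Implicit Arguments. Unset Strict Implicit. Unset Printing Implicit Defensive.
Import Order.TTheory GRing.Theory Num.Theory.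

Definition simple_graph (T : finType) (e : rel T) : Prop :=
  symmetric e /\ irreflexive e.

Local Open Scope ring_scope.

Definition nusg_embedding (R : realFieldType) (T : finType) (e : rel T)
    (f : T -> R * R) : Prop :=
  (forall v, -1 <= (f v).1 <= 1 /\ -1 <= (f v).2 <= 1) /\
  (forall v w, v != w ->
     (e v w <-> Num.max `|(f v).1 - (f w).1| `|(f v).2 - (f w).2| <= 1)).

Definition nusg (R : realFieldType) (T : finType) (e : rel T) : Prop :=
  simple_graph e /\ exists f : T -> R * R, nusg_embedding e f.

Local Close Scope ring_scope.

Definition cycle_adj (l : nat) (i j : 'I_l) : bool :=
  (val j == (val i).+1 %% l) || (val i == (val j).+1 %% l).

Definition in_X (T : finType) (e : rel T) (v : T) : Prop :=
  exists (l : nat) (w : 'I_l -> T),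
    4 <= l /\ injective w /\
    (forall i, w i != v) /\
    (forall i, ~~ e v (w i)) /\
    exists s : 'I_l -> 'I_l, bijective s /\
      forall i j, i != j -> e (w i) (w j) = cycle_adj (s i) (s j).

(* Main.v *)
Require Import Defs.
From mathcomp Require Import all_boot all_order all_algebra.
From mathcomp Require Import zify ring lra.
Set Implicit Arguments. Unset Strict Implicit. Unset Printing Implicit Defensive.
Import Order.TTheory GRing.Theory Num.Theory.

Local Open Scope ring_scope.

Lemma exmin (R : realFieldType) (I : finType) (i0 : I) (F : I -> R) :
  exists i, forall j, F i <= F j.
Proof.
case: (@arg_minP _ _ _ i0 predT F (erefl true)) => i _ H.
by exists i => j; apply: H.
Qed.

Lemma adj_iff (R : realFieldType) (x1 y1 x2 y2 : R) :
  (Num.max `|x1 - x2| `|y1 - y2| <= 1) <->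
  ((-1 <= x1 - x2 <= 1) /\ (-1 <= y1 - y2 <= 1)).
Proof.
rewrite ge_max !ler_norml; split; first by move/andP.
by case=> -> ->.
Qed.

Local Close Scope ring_scope.

Lemma succ_mod (l x : nat) : x < l -> x.+1 %% l = if x.+1 == l then 0 else x.+1.
Proof.
move=> hx; case: eqP => [->|ne]; first by rewrite modnn.
by rewrite modn_small //; lia.
Qed.

Lemma cyc_nbrs (l : nat) (hl : 4 <= l) (k : 'I_l) :
  exists k1 k2 : 'I_l, (k1 != k) /\ (k2 != k) /\ (k1 != k2) /\
     cycle_adj k k1 /\ cycle_adj k k2 /\ ~~ cycle_adj k1 k2.
Proof.
case: k => m hm.
pose a := if m.+1 == l then 0 else m.+1.
pose b := if m == 0 then l.-1 else m.-1.
have ha : a < l by rewrite /a; case: eqP => ?; lia.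
have hb : b < l by rewrite /b; case: eqP => ?; lia.
exists (Ordinal ha), (Ordinal hb).
rewrite /cycle_adj /= !succ_mod //.
rewrite -!(inj_eq val_inj) /= /a /b.
split; [|split; [|split; [|split; [|split]]]];
  repeat (case: eqP => /=; try lia); try lia.
Qed.


Lemma hole_nbrs (T : finType) (e : rel T) (l : nat) (w : 'I_l -> T)
   (s : 'I_l -> 'I_l) (hl : 4 <= l) (hs : bijective s)
   (hadj : forall i j, i != j -> e (w i) (w j) = cycle_adj (s i) (s j))
   (i : 'I_l) :
  exists j1 j2, (j1 != i) /\ (j2 != i) /\ (j1 != j2) /\ e (w i) (w j1) /\
     e (w i) (w j2) /\ ~~ e (w j1) (w j2).
Proof.
case: hs => g sg gs.
have [k1 [k2 [n1 [n2 [n12 [a1 [a2 a12]]]]]]] := cyc_nbrs hl (s i).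
have d1 : g k1 != i by apply/eqP => h; move: n1; rewrite -h gs eqxx.
have d2 : g k2 != i by apply/eqP => h; move: n2; rewrite -h gs eqxx.
have d12 : g k1 != g k2 by apply/eqP => h; move: n12; rewrite -(gs k1) h gs eqxx.
exists (g k1), (g k2); do !split => //.
- by rewrite hadj 1?eq_sym // gs.
- by rewrite hadj 1?eq_sym // gs.
- by rewrite hadj // !gs.
Qed.

Local Open Scope ring_scope.

Lemma far_same (R : realFieldType) (x1 x2 a : R) :
  -1 <= x1 <= 1 -> -1 <= x2 <= 1 -> -1 <= a <= 1 ->
  (1 < x1 - a \/ x1 - a < -1) -> (1 < x2 - a \/ x2 - a < -1) ->
  -1 <= x1 - x2 <= 1.
Proof.
move=> /andP[? ?] /andP[? ?] /andP[? ?] [?|?] [?|?]; apply/andP; split; lra.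
Qed.

Lemma core (R : realFieldType) (T : finType) (e : rel T) (X Y : T -> R)
  (hb : forall u, -1 <= X u <= 1 /\ -1 <= Y u <= 1)
  (he : forall u w, u != w ->
     (e u w <-> ((-1 <= X u - X w <= 1) /\ (-1 <= Y u - Y w <= 1))))
  (v : T) (hv : 0 <= Y v) (l : nat) (w : 'I_l -> T) (hl : (4 <= l)%N)
  (hinj : injective w) (hwv : forall i, w i != v) (hnv : forall i, ~~ e v (w i))
  (s : 'I_l -> 'I_l) (hs : bijective s)
  (hadj : forall i j, i != j -> e (w i) (w j) = cycle_adj (s i) (s j)) :
  exists i, 0 < Y (w i) < Y v.
Proof.
have i0 : 'I_l by exists 0%N; lia.
have dw : forall i j, i != j -> w i != w j by move=> i j; rewrite (inj_eq hinj).
have close : forall i j, i != j -> e (w i) (w j) ->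
    (-1 <= X (w i) - X (w j) <= 1) /\ (-1 <= Y (w i) - Y (w j) <= 1).
  by move=> i j ij /(he _ _ (dw _ _ ij)).
have farv : forall i, (1 < X v - X (w i) \/ X v - X (w i) < -1) \/
                      (1 < Y v - Y (w i) \/ Y v - Y (w i) < -1).
  move=> i; move/negP: (hnv i) => H.
  have nvw : v != w i by rewrite eq_sym.
  case: (boolP (-1 <= X v - X (w i) <= 1)) => hx.
  - case: (boolP (-1 <= Y v - Y (w i) <= 1)) => hy.
      by exfalso; apply: H; apply/(he _ _ nvw); split.
    right; move: hy; rewrite negb_and -!ltNge => /orP[?|?]; [right|left]; lra.
  - left; move: hx; rewrite negb_and -!ltNge => /orP[?|?]; [right|left]; lra.
have P1 : forall i, Y (w i) < Y v.
  have [im Hm] := exmin i0 (fun i => - Y (w i)).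
  suff : Y (w im) < Y v by move=> h i; have := Hm i; lra.
  rewrite ltNge; apply/negP => hge.
  have [j1 [j2 [n1 [n2 [n12 [a1 [a2 a12]]]]]]] := hole_nbrs hl hs hadj im.
  have n1' : im != j1 by rewrite eq_sym.
  have [cx1 cy1] := close im j1 n1' a1.
  have n2' : im != j2 by rewrite eq_sym.
  have [cx2 cy2] := close im j2 n2' a2.
  have m1 := Hm j1; have m2 := Hm j2.
  have [bx1 by1] := hb (w j1); have [bx2 by2] := hb (w j2); have [bxv byv] := hb v.
  have fx1 : 1 < X v - X (w j1) \/ X v - X (w j1) < -1.
    case: (farv j1) => // [[h|h]]; move: by1 byv cy1 => /andP[? ?] /andP[? ?] /andP[? ?]; lra.
  have fx2 : 1 < X v - X (w j2) \/ X v - X (w j2) < -1.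
    case: (farv j2) => // [[h|h]]; move: by2 byv cy2 => /andP[? ?] /andP[? ?] /andP[? ?]; lra.
  have hxx : -1 <= X (w j1) - X (w j2) <= 1.
    apply: (far_same bx1 bx2 bxv).
    - by case: fx1 => ?; [right|left]; lra.
    - by case: fx2 => ?; [right|left]; lra.
  have hyy : -1 <= Y (w j1) - Y (w j2) <= 1.
    move: cy1 cy2 => /andP[? ?] /andP[? ?]; apply/andP; split; lra.
  by move/negP: a12; apply; apply/(he _ _ (dw _ _ n12)); split.
have P2 : exists i, 0 < Y (w i).
  case: (boolP [exists i, 0 < Y (w i)]) => [/existsP // | /existsPn hn].
  have [im Hm] := exmin i0 (fun i => X (w i)).
  have [j1 [j2 [n1 [n2 [n12 [a1 [a2 a12]]]]]]] := hole_nbrs hl hs hadj im.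
  have n1' : im != j1 by rewrite eq_sym.
  have [cx1 cy1] := close im j1 n1' a1.
  have n2' : im != j2 by rewrite eq_sym.
  have [cx2 cy2] := close im j2 n2' a2.
  have m1 := Hm j1; have m2 := Hm j2.
  have [bx1 by1] := hb (w j1); have [bx2 by2] := hb (w j2).
  have y1 := hn j1; have y2 := hn j2; rewrite -leNgt in y1 y2.
  have hxx : -1 <= X (w j1) - X (w j2) <= 1.
    move: cx1 cx2 => /andP[? ?] /andP[? ?]; apply/andP; split; lra.
  have hyy : -1 <= Y (w j1) - Y (w j2) <= 1.
    move: by1 by2 => /andP[? ?] /andP[? ?]; apply/andP; split; lra.
  by exfalso; move/negP: a12; apply; apply/(he _ _ (dw _ _ n12)); split.
have [i hi] := P2; exists i; rewrite hi /=; exact: P1.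
Qed.

Local Close Scope ring_scope.

Theorem mainTheorem18 (R : realFieldType) (T : finType) (e : rel T)
    (hG : nusg R e) (hne : 0 < #|T|) :
  ~ (forall v : T, in_X e v).
Proof.
case: hG => [[hsym hirr] [f [hb he]]] hall.
have [t0 _] := card_gt0P hne.
have [v hv] := exmin t0 (fun u => `|(f u).2|%R).
have he' : forall u w, u != w -> (e u w <->
   ((-1 <= (f u).1 - (f w).1 <= 1) /\ (-1 <= (f u).2 - (f w).2 <= 1))%R).
  by move=> u w uw; rewrite -adj_iff; exact: he.
case: (hall v) => l [w [hl [hinj [hwv [hnv [s [hs hadj]]]]]]].
case: (lerP 0 (f v).2)%R => hsg.
- have [i /andP[h1 h2]] := core (X:=fun u => (f u).1) (Y:=fun u => (f u).2)
      hb he' hsg hl hinj hwv hnv hs hadj.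
  have := hv (w i); rewrite !ger0_norm /=; lra.
- have hb2 : forall u, ((-1 <= (f u).1 <= 1) /\ (-1 <= - (f u).2 <= 1))%R.
    move=> u; have [h1 /andP[h2 h3]] := hb u; split => //; apply/andP; split; lra.
  have he2 : forall u w, u != w -> (e u w <->
     ((-1 <= (f u).1 - (f w).1 <= 1) /\ (-1 <= - (f u).2 - - (f w).2 <= 1))%R).
    move=> u w' uw; rewrite he' //; split=> -[-> /andP[h1 h2]]; split => //;
      apply/andP; split; lra.
  have hsg' : (0 <= - (f v).2)%R by lra.
  have [i /andP[h1 h2]] := core (X:=fun u => (f u).1) (Y:=fun u => (- (f u).2)%R)
      hb2 he2 hsg' hl hinj hwv hnv hs hadj.
  have := hv (w i); rewrite !ltr0_norm /=; lra.
Qed.
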